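(* Define $C_1(h)=\binom{4h+2}{h}$, $C_2(h)=\frac{2h+1}{4h+1}\binom{4h+1}{h}$, $C_3(h)=\frac12\binom{4h}{h}$, $C_4(h)=\binom{4h+1}{h}$ (equivalently $C_1(h)=\tfrac12C(2h+1,h+1)$, $C_2(h)=\tfrac12C(2h,h+1)$, $C_3(h)=\tfrac12C(2h,h)$, $C_4(h)=\tfrac12C(2h+1,h)$). Then for any positive integer $h$, \[\sum_{j=0}^hC_3(j)C_3(h-j)=2\sum_{j=0}^{h-1}C_2(j)C_1(h-1-j),\] \[\sum_{j=0}^hC_3(j)C_4(h-j)=\sum_{j=0}^hC_2(j)C_3(h-j)+\sum_{j=0}^{h-1}C_1(j)C_1(h-1-j),\] \[\sum_{j=0}^hC_4(j)C_4(h-j)=2\sum_{j=0}^hC_3(j)C_1(h-j).\]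
   Context: $C(p,q)=\frac{(2p)!(2q)!}{p!(p+q)!q!}$. *)

(* Defs.v *)
(* values of C_1..C_4 are rationals (C_3(0) = 1/2). *)
From mathcomp Require Import all_boot all_order all_algebra.
Set Implicit Arguments. Unset Strict Implicit. Unset Printing Implicit Defensive.
Import Order.TTheory GRing.Theory Num.Theory.
Local Open Scope ring_scope.

Definition C1 (h : nat) : rat := ('C(4 * h + 2, h))%:R.
Definition C2 (h : nat) : rat :=
  ((2 * h + 1)%:R / (4 * h + 1)%:R) * ('C(4 * h + 1, h))%:R.
Definition C3 (h : nat) : rat := 2%:R^-1 * ('C(4 * h, h))%:R.
Definition C4 (h : nat) : rat := ('C(4 * h + 1, h))%:R.

(* Main.v *)
Require Import Defs.
From mathcomp Require Import all_boot all_order all_algebra.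
From mathcomp Require Import zify ring lra.
Import GRing.Theory Num.Theory.
Local Open Scope ring_scope.

Definition aa (r n : nat) : rat := ('C(4 * n + r, n))%:R.

Definition qq (y m : nat) : rat :=
  if m is m'.+1 then aa y m'.+1 - 4%:R * ('C(4 * m' + 3 + y, m'))%:R else 1.

Lemma aa0 r : aa r 0 = 1.
Proof. by rewrite /aa muln0 add0n bin0. Qed.

Lemma aaP r n : aa r.+1 n.+1 = aa r n.+1 + aa (r + 4) n.
Proof.
rewrite /aa.
have -> : (4 * n.+1 + r.+1 = (4 * n.+1 + r).+1)%N by lia.
rewrite binS natrD.
by have -> : (4 * n.+1 + r = 4 * n + (r + 4))%N by lia.
Qed.

Lemma qqP y m : qq y.+1 m.+1 = qq y m.+1 + qq (y + 4) m.
Proof.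
case: m => [|m].
  rewrite /qq /aa !bin0 !bin1.
  have -> : (4 * 1 + y.+1 = (4 * 1 + y) + 1)%N by lia.
  rewrite natrD; ring.
rewrite /qq aaP.
have -> : (4 * m.+1 + 3 + y.+1 = (4 * m.+1 + 3 + y).+1)%N by lia.
rewrite binS natrD.
have -> : (4 * m.+1 + 3 + y = 4 * m + 3 + (y + 4))%N by lia.
ring.
Qed.

Lemma qq0 m : qq 0 m.+1 = 0.
Proof.
rewrite /qq /aa !addn0.
have h := mul_bin_diag (4 * m.+1) m.
have e : (4 * m.+1).-1 = (4 * m + 3)%N by lia.
rewrite e in h.
apply/eqP; rewrite subr_eq0; apply/eqP.
have : ((4 * m.+1) * 'C(4 * m + 3, m))%:R = (m.+1 * 'C(4 * m.+1, m.+1))%:R :> rat.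
  by rewrite h.
rewrite !natrM => e2.
apply: (mulfI (x := m.+1%:R)); first by rewrite pnatr_eq0.
rewrite -e2; ring.
Qed.

Definition ff (r s n : nat) : rat := \sum_(0 <= k < n.+1) aa r k * aa s (n - k).

Lemma coreG r n y :
  \sum_(0 <= k < n.+1) aa r k * qq y (n - k) = aa (r + y) n.
Proof.
elim: n y => [|n IH] y.
  by rewrite big_nat1 /= !aa0 mulr1.
elim: y => [|y IHy].
  rewrite big_nat_recr //= ?subnn /= mulr1 addn0 big_nat big1 ?add0r //.
  move=> i /andP[_ hi]; rewrite subSn // qq0 mulr0 //.
rewrite big_nat_recr //= ?subnn /= mulr1.
rewrite (eq_big_nat _ _ (F2 := fun k => aa r k * qq y (n.+1 - k) + aa r k * qq (y + 4) (n - k))); last first.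
  by move=> i /andP[_ hi]; rewrite subSn // qqP mulrDr.
have IHy' : \sum_(0 <= i < n.+1) aa r i * qq y (n.+1 - i) = aa (r + y) n.+1 - aa r n.+1.
  by rewrite -IHy [in RHS]big_nat_recr //= ?subnn /= mulr1 addrK.
rewrite big_split /= IH IHy'.
rewrite (addnS r y) (aaP (r + y)) addnA; ring.
Qed.

Lemma aa_qq s m : 4%:R * aa s m - 3%:R * aa s.+1 m = qq s.+1 m.
Proof.
case: m => [|m]; first by rewrite /qq !aa0; ring.
rewrite /qq.
have e : aa s.+1 m.+1 = aa s m.+1 + ('C(4 * m + 3 + s.+1, m))%:R.
  rewrite /aa.
  have -> : (4 * m.+1 + s.+1 = (4 * m.+1 + s).+1)%N by lia.
  rewrite binS natrD.
  by have -> : (4 * m + 3 + s.+1 = 4 * m.+1 + s)%N by lia.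
rewrite e.
ring.
Qed.

Lemma F1 r s n : 4%:R * ff r s n - 3%:R * ff r s.+1 n = aa (r + s.+1) n.
Proof.
rewrite /ff !mulr_sumr -sumrB -coreG; apply: eq_bigr => k _.
by rewrite -aa_qq; ring.
Qed.

Lemma ffC r s n : ff r s n = ff s r n.
Proof.
rewrite /ff big_nat_rev; apply: eq_big_nat => k /andP[_ hk].
rewrite add0n subSS.
have -> : (n - (n - k) = k)%N by lia.
by rewrite mulrC.
Qed.

Lemma ffS r s n : ff r.+1 s n = ff r s.+1 n.
Proof.
have h1 := F1 r s n.
have h2 := F1 s r n.
rewrite (ffC s r) (ffC s r.+1) in h2.
have : 3%:R * ff r s.+1 n = 3%:R * ff r.+1 s n :> rat.
  rewrite -[LHS]opprK -[RHS]opprK; congr (- _).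
  apply: (addrI (4%:R * ff r s n)).
  by rewrite h1 h2 !addnS addnC.
move=> e; apply: (mulfI (x := 3%:R)); first by rewrite pnatr_eq0.
by rewrite e.
Qed.

Lemma ffP r s n : ff r s.+1 n.+1 = ff r s n.+1 + ff r (s + 4) n.
Proof.
rewrite /ff big_nat_recr //= [in RHS]big_nat_recr //= ?subnn !aa0.
rewrite (eq_big_nat _ _ (F2 := fun k => aa r k * aa s (n.+1 - k) + aa r k * aa (s + 4) (n - k))); last first.
  by move=> i /andP[_ hi]; rewrite subSn // aaP mulrDr.
rewrite big_split /=; ring.
Qed.

Lemma aa_extra n : aa 1 n.+1 = aa 4 n + 4%:R * aa 3 n.
Proof.
rewrite (aaP 0) addrC; congr (_ + _).
rewrite /aa.
have h := mul_bin_diag (4 * n.+1) n.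
have e : (4 * n.+1).-1 = (4 * n + 3)%N by lia.
rewrite e in h.
rewrite addn0.
apply: (mulfI (x := n.+1%:R)); first by rewrite pnatr_eq0.
have h' : ((4 * n.+1 * 'C(4 * n + 3, n))%N)%:R = ((n.+1 * 'C(4 * n.+1, n.+1))%N)%:R :> rat by rewrite h.
rewrite !natrM in h'. rewrite -h'; ring.
Qed.

Lemma C2E j : C2 j = 2%:R * aa 0 j - aa 1 j.
Proof.
rewrite /C2 /aa addn0.
have h := mul_bin_down (4 * j + 1) j.
have e1 : (4 * j + 1).-1 = (4 * j)%N by lia.
have e2 : (4 * j + 1 - j = 3 * j + 1)%N by lia.
rewrite e1 e2 in h.
have h' : ((4 * j + 1) * 'C(4 * j, j))%:R = ((3 * j + 1) * 'C(4 * j + 1, j))%:R :> rat by rewrite h.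
have nz : (4 * j + 1)%:R != 0 :> rat by rewrite pnatr_eq0 addn1.
have hc : ('C(4 * j, j))%:R = ((3 * j + 1) * 'C(4 * j + 1, j))%:R / (4 * j + 1)%:R :> rat.
  by rewrite -h' natrM mulrAC mulfV // mul1r.
rewrite hc. move: nz. rewrite !(natrD, natrM) => nz.
field. by [].
Qed.

Lemma C3E j : C3 j = 2%:R^-1 * aa 0 j.
Proof. by rewrite /C3 /aa addn0. Qed.

Lemma sub1E n j : (n.+1 - 1 - j = n - j)%N.
Proof. by rewrite subn1. Qed.

Lemma L33 m : \sum_(0 <= j < m.+1) C3 j * C3 (m - j) = 2%:R^-1 * 2%:R^-1 * ff 0 0 m.
Proof. rewrite /ff mulr_sumr; apply: eq_bigr => j _; rewrite !C3E; ring. Qed.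

Lemma L34 m : \sum_(0 <= j < m.+1) C3 j * C4 (m - j) = 2%:R^-1 * ff 0 1 m.
Proof. rewrite /ff mulr_sumr; apply: eq_bigr => j _; rewrite !C3E; rewrite /C4 /aa; ring. Qed.

Lemma L23 m : \sum_(0 <= j < m.+1) C2 j * C3 (m - j) = 2%:R^-1 * (2%:R * ff 0 0 m - ff 1 0 m).
Proof.
rewrite /ff mulr_sumr -sumrB mulr_sumr; apply: eq_bigr => j _.
rewrite C2E C3E; ring.
Qed.

Lemma L21 n : \sum_(0 <= j < n.+1) C2 j * C1 (n.+1 - 1 - j) = 2%:R * ff 0 2 n - ff 1 2 n.
Proof.
rewrite /ff mulr_sumr -sumrB; apply: eq_bigr => j _.
rewrite sub1E C2E /C1 /aa; ring.
Qed.

Lemma L11 n : \sum_(0 <= j < n.+1) C1 j * C1 (n.+1 - 1 - j) = ff 2 2 n.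
Proof. rewrite /ff; apply: eq_bigr => j _; by rewrite sub1E. Qed.

Lemma L44 m : \sum_(0 <= j < m.+1) C4 j * C4 (m - j) = ff 1 1 m.
Proof. by []. Qed.

Lemma L31 m : \sum_(0 <= j < m.+1) C3 j * C1 (m - j) = 2%:R^-1 * ff 0 2 m.
Proof. rewrite /ff mulr_sumr; apply: eq_bigr => j _; rewrite !C3E; rewrite /C1 /aa; ring. Qed.

Theorem corollary6p2 (h : nat) : (0 < h)%N ->
  [/\ \sum_(0 <= j < h.+1) C3 j * C3 (h - j)
        = 2%:R * \sum_(0 <= j < h) C2 j * C1 (h - 1 - j),
      \sum_(0 <= j < h.+1) C3 j * C4 (h - j)
        = \sum_(0 <= j < h.+1) C2 j * C3 (h - j)
          + \sum_(0 <= j < h) C1 j * C1 (h - 1 - j)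
    & \sum_(0 <= j < h.+1) C4 j * C4 (h - j)
        = 2%:R * \sum_(0 <= j < h.+1) C3 j * C1 (h - j)].
Proof.
case: h => // n _.
rewrite L33 L34 L23 L21 L11 L44 L31.
have s01 := ffS 0 0 n.+1.
have s11 := ffS 0 1 n.+1.
have s12 := ffS 0 2 n.
have s13 := ffS 1 3 n.
have s22 := ffS 1 2 n.
have s03 := ffS 0 3 n.
have p0 := ffP 0 0 n.
have f1 := F1 0 0 n.+1.
have f2 := F1 0 2 n.
have f3 := F1 0 3 n.
have ex := aa_extra n.
rewrite /= in f1 f2 f3.
split.
- rewrite s12. move: p0 f1 f2 f3 ex. rewrite !add0n. lra.
- rewrite s01 s22 s03. move: p0; rewrite !add0n. lra.
- rewrite s11 mulrA divff ?mul1r //.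
Qed.
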